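(* Let $C$ be an independent set of the Kneser graph of flags of type $\{2,3\}$ of $\mathrm{PG}(6,q)$ such that every plane and every solid occurs in at most $q+1$ flags of $C$; for a point $X$ let $\Delta_X(C)$ be the set of flags $(E,S)\in C$ with $X\in E$. Let $P$ be a point and suppose there are flags $(E_i,S_i)\in\Delta_P(C)$, $i\in\{1,2,3\}$, with $E_i\cap E_j=P$ for distinct $i,j$. Then every point $Q$ with $Q\notin\langle E_i,E_j\rangle$ and $Q\notin S_i$ for all $i,j\in\{1,2,3\}$ satisfies $$|\Delta_Q(C)|\le 3q^8+12q^7+21q^6+28q^5+26q^4+18q^3+12q^2+8q+4.$$
   Context: Dimensions are projective (planes 2, solids 3). A flag of type $\{2,3\}$ is a pair $(E,S)$ of a plane $E$ and a solid $S$ with $E\subseteq S$; in the Kneser graph distinct flags $(E,S),(E',S')$ are adjacent iff $E\cap S'=\emptyset$ and $E'\cap S=\emptyset$. $\langle\cdot\rangle$ denotes the span. *)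

(* Defs.v *)
From HB Require Import structures.
From mathcomp Require Import all_boot all_order all_algebra all_field.
Set Implicit Arguments. Unset Strict Implicit. Unset Printing Implicit Defensive.
Import GRing.Theory.
Local Open Scope ring_scope.

(* PG(6,q) is modelled by the 7-dimensional vector space 'rV[F]_7 over a
   finite field F with q = #|F|.  Projective subspaces of projective
   dimension d are vector subspaces of dimension d+1. *)
Definition PGvec (F : finFieldType) := 'rV[F]_7.
Definition subsp (F : finFieldType) := {vspace 'rV[F]_7}.

Definition is_point (F : finFieldType) (X : subsp F) : bool := \dim X == 1%N.
Definition is_plane (F : finFieldType) (E : subsp F) : bool := \dim E == 3%N.
Definition is_solid (F : finFieldType) (S : subsp F) : bool := \dim S == 4%N.

Definition flag (F : finFieldType) := (subsp F * subsp F)%type.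
Definition is_flag23 (F : finFieldType) (f : flag F) : bool :=
  [&& is_plane f.1, is_solid f.2 & (f.1 <= f.2)%VS].

(* Adjacency in the Kneser graph: distinct flags with E ∩ S' = ∅ and
   E' ∩ S = ∅ (projectively empty = trivial vector intersection). *)
Definition kneser_adj (F : finFieldType) (f g : flag F) : bool :=
  [&& f != g, (f.1 :&: g.2 == 0)%VS & (g.1 :&: f.2 == 0)%VS].

(* A (finite) set of flags, given as a duplicate-free list. *)
Definition independent_set (F : finFieldType) (C : seq (flag F)) : Prop :=
  [/\ uniq C, all (@is_flag23 F) C &
      forall f g, f \in C -> g \in C -> ~~ kneser_adj f g].

Definition Delta (F : finFieldType) (X : subsp F) (C : seq (flag F)) :
  seq (flag F) := [seq f <- C | (X <= f.1)%VS].

(* Main.v *)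
Require Import Defs.
From HB Require Import structures.
From mathcomp Require Import all_boot all_order all_algebra all_field.
From mathcomp Require Import zify ring.
Set Implicit Arguments. Unset Strict Implicit. Unset Printing Implicit Defensive.
Import GRing.Theory.

Lemma count_class (T U : eqType) (s : seq T) (g : T -> U) (k : nat) :
  (forall u, count (fun x => g x == u) s <= k) ->
  forall (Y : seq U) (p : pred T),
  (forall x, x \in s -> p x -> g x \in Y) -> count p s <= k * size Y.
Proof.
move=> Hk; elim=> [|u Y IH] p Hp.
  rewrite muln0 leqn0; apply/eqP; rewrite -(count_pred0 s); apply: eq_in_count => x xs /=.
  by apply/negbTE/negP => px; have := Hp x xs px.
have -> : count p s = count (fun x => p x && (g x == u)) s + count (fun x => p x && (g x != u)) s.
  rewrite -count_predUI (@eq_count _ (predI _ _) pred0) ?count_pred0 ?addn0; last first.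
    by move=> x /=; case: (g x == u); rewrite ?andbF.
  by apply: eq_count => x /=; case: (g x == u); rewrite ?andbT ?andbF ?orbF.
rewrite mulnS; apply: leq_add.
  by apply: leq_trans (Hk u); apply: sub_count => x /andP[].
apply: IH => x xs /andP[px gu]; have := Hp x xs px; by rewrite inE (negbTE gu).
Qed.

Lemma size_cover (T : eqType) (s : seq T) (a b : pred T) :
  (forall x, x \in s -> a x || b x) -> size s <= count a s + count b s.
Proof.
move=> H; rewrite -count_predUI; apply: leq_trans (leq_addr _ _).
by rewrite -(count_predT s) (eq_in_count (a2 := predU a b)) // => x xs; rewrite /= H.
Qed.

Lemma fiber_bound (T : finType) (U : eqType) (f : T -> U) (m : nat) :
  forall (Y : seq U) (W : {set T}), uniq Y ->
  (forall y, y \in Y -> m <= #|W :&: [set w | f w == y]|) -> size Y * m <= #|W|.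
Proof.
elim=> [|y Y IH] W /= uY H; first by rewrite mul0n.
case/andP: uY => yY uY.
rewrite mulSn -(cardsID [set w | f w == y] W); apply: leq_add; first exact: H (mem_head _ _).
apply: IH => // y' y'Y.
have -> : (W :\: [set w | f w == y]) :&: [set w | f w == y'] = W :&: [set w | f w == y'].
  have yy : y' != y by apply: contraNneq yY => <-.
  apply/setP => w; rewrite !inE; case: (f w =P y') => [->|]; last by rewrite !andbF.
  by rewrite yy.
by apply: H; rewrite inE y'Y orbT.
Qed.

Lemma card_dep (T1 T2 : finType) (A : {set T1}) (B : T1 -> {set T2}) :
  #|[set p : T1 * T2 | (p.1 \in A) && (p.2 \in B p.1)]| = \sum_(a in A) #|B a|.
Proof.
rewrite -sum1_card.
rewrite (eq_bigl (fun p : T1 * T2 => (p.1 \in A) && (p.2 \in B p.1))); last by move=> p; rewrite inE.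
rewrite -(pair_big_dep (fun a => a \in A) (fun a b => b \in B a) (fun _ _ => 1%N)) /=.
by apply: eq_bigr => a _; rewrite sum1_card.
Qed.

Lemma card_dep_le (T1 T2 : finType) (A : {set T1}) (B : T1 -> {set T2}) k :
  (forall a, a \in A -> #|B a| <= k) ->
  #|[set p : T1 * T2 | (p.1 \in A) && (p.2 \in B p.1)]| <= #|A| * k.
Proof.
move=> H; rewrite card_dep -sum_nat_const; exact: leq_sum.
Qed.

Lemma card_dep_ge (T1 T2 : finType) (A : {set T1}) (B : T1 -> {set T2}) k :
  (forall a, a \in A -> k <= #|B a|) ->
  #|A| * k <= #|[set p : T1 * T2 | (p.1 \in A) && (p.2 \in B p.1)]|.
Proof.
move=> H; rewrite card_dep -sum_nat_const; exact: leq_sum.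
Qed.

Section Vec.
Variable F : finFieldType.
Local Notation V := 'rV[F]_7.
Local Notation q := #|F|.
Implicit Types (U W : {vspace V}) (x v : V).

Definition vs U : {set V} := [set v | v \in U].
Definition vsd U W : {set V} := [set v | (v \in U) && (v \notin W)].

Lemma in_vsd U W v : (v \in vsd U W) = (v \in U) && (v \notin W).
Proof. by rewrite inE. Qed.

Lemma card_vs U : #|vs U| = q ^ \dim U.
Proof. by rewrite cardsE card_vspace. Qed.

Lemma card_vsd U W : #|vsd U W| = q ^ \dim U - q ^ \dim (U :&: W).
Proof.
have -> : vsd U W = vs U :\: vs (U :&: W).
  by apply/setP => v; rewrite !inE memv_cap; case: (v \in U); case: (v \in W).
rewrite cardsD !card_vs; congr (_ - _).
have -> : vs U :&: vs (U :&: W) = vs (U :&: W).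
  by apply/setP => v; rewrite !inE memv_cap; case: (v \in U).
by rewrite card_vs.
Qed.

Lemma card_vsd_sub U W : (W <= U)%VS -> #|vsd U W| = q ^ \dim U - q ^ \dim W.
Proof. by move=> /capv_idPr e; rewrite card_vsd e. Qed.

Lemma card_vsd0 U : #|vsd U 0%VS| = q ^ \dim U - 1.
Proof. by rewrite card_vsd_sub ?sub0v // dimv0. Qed.

Lemma dim_full : \dim (fullv : {vspace V}) = 7.
Proof. by rewrite dimvf. Qed.

Lemma card_compl W : #|vsd fullv W| = q ^ 7 - q ^ \dim W.
Proof. by rewrite card_vsd_sub ?subvf // dim_full. Qed.

Lemma dim_le7 U : \dim U <= 7.
Proof. by have := dimvS (subvf U); rewrite dim_full. Qed.

Lemma dimS_eq U W : (U <= W)%VS -> \dim W <= \dim U -> U = W.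
Proof. by move=> s d; apply/eqP; rewrite eqEdim s. Qed.

Lemma dim_line x : x != 0%R -> \dim <[x]> = 1.
Proof. by move=> h; rewrite dim_vline h. Qed.

Lemma addline U x : x \notin U -> \dim (U + <[x]>) = (\dim U).+1.
Proof.
move=> xU.
have x0 : x != 0%R by apply: contraNneq xU => ->; rewrite mem0v.
have c0 : \dim (U :&: <[x]>) = 0.
  case: (leqP (\dim (U :&: <[x]>)) 0) => [h0|h0]; first lia.
  have e2 : (U :&: <[x]>)%VS = <[x]>%VS.
    by apply: dimS_eq; [exact: capvSr | rewrite dim_line].
  by move: xU; rewrite memvE -e2 capvSl.
have := dimv_sum_cap U <[x]>%VS; rewrite c0 dim_line //; lia.
Qed.

Lemma line_eq x r : x \in <[r]>%VS -> x != 0%R -> <[x]>%VS = <[r]>%VS.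
Proof.
move=> xr x0; apply: dimS_eq; first by rewrite -memvE.
rewrite (dim_line x0) dim_vline; by case: (r != 0%R).
Qed.

Lemma dim1_line U : \dim U = 1 -> U = <[vpick U]>%VS /\ vpick U != 0%R.
Proof.
move=> d; have n0 : vpick U != 0%R.
  by rewrite vpick0 -dimv_eq0 d.
split=> //; apply/esym/dimS_eq; first by rewrite -memvE memv_pick.
by rewrite d dim_line.
Qed.

Lemma dim_sum_le U W : \dim (U + W) <= \dim U + \dim W.
Proof. have := dimv_sum_cap U W; lia. Qed.

Lemma dim_cap_ge U W : \dim U + \dim W <= \dim (U :&: W) + \dim (U + W).
Proof. have := dimv_sum_cap U W; lia. Qed.

Lemma memv_addl x U W : x \in U -> x \in (U + W)%VS.
Proof. by move=> h; apply: (subvP (addvSl U W)). Qed.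
Lemma memv_addr x U W : x \in W -> x \in (U + W)%VS.
Proof. by move=> h; apply: (subvP (addvSr U W)). Qed.

Lemma memv_sub x U W : x \in U -> (U <= W)%VS -> x \in W.
Proof. by move=> h s; apply: (subvP s). Qed.

End Vec.

Ltac solve_mem :=
  first [ exact: memv_line | assumption
        | (apply: memv_addl; solve_mem) | (apply: memv_addr; solve_mem) ].
Ltac solve_sub :=
  first [ exact: subvv | assumption | (rewrite -memvE; solve_mem)
        | (rewrite subv_add; apply/andP; split; solve_sub)
        | (apply: subv_trans; [eassumption|]; solve_sub) ].

Section Cases.
Variable F : finFieldType.
Local Notation V := 'rV[F]_7.
Local Notation q := #|F|.

Lemma case1a (S : {vspace V}) (q0 : V) (Y : seq {vspace V}) :
  \dim S = 4 -> q0 \notin S -> uniq Y ->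
  (forall y, y \in Y -> [/\ \dim y = 3, q0 \in y & 1 < \dim (y :&: S)]) ->
  size Y * ((q^2-1)*(q^2-q)) <= (q^4-1)*(q^4-q).
Proof.
move=> dS qS uY HY.
pose f := fun p : V * V => (<[p.1]> + <[p.2]> + <[q0]>)%VS.
apply: (leq_trans (@fiber_bound _ _ f _ _ [set p : V * V | (p.1 \in vsd S 0%VS) && (p.2 \in vsd S <[p.1]>%VS)] uY _)) => [y yY|]; last first.
  have := @card_dep_le _ _ (vsd S 0%VS) (fun a => vsd S <[a]>%VS) (q^4 - q).
  rewrite card_vsd0 dS; apply => a; rewrite in_vsd memv0 => /andP[aS a0].
  by rewrite card_vsd_sub -?memvE // dS dim_line // expn1.
case: (HY y yY) => dy qy dyS.
have dyS2 : \dim (y :&: S) = 2.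
  suff h : \dim (y :&: S) <= 2 by apply/eqP; rewrite eqn_leq h dyS.
  rewrite leqNgt; apply/negP => h3.
  have e : (y :&: S)%VS = y by apply: dimS_eq; [exact: capvSl | rewrite dy].
  by move: qS; rewrite (memv_sub qy (_ : y <= S)%VS) // -e capvSr.
apply: leq_trans (subset_leq_card (_ : [set p : V*V | (p.1 \in vsd (y:&:S) 0%VS) && (p.2 \in vsd (y :&: S) <[p.1]>%VS)] \subset _)).
  have := @card_dep_ge _ _ (vsd (y :&: S) 0%VS) (fun a => vsd (y :&: S) <[a]>%VS) (q^2 - q).
  rewrite card_vsd0 dyS2; apply => a; rewrite in_vsd memv0 => /andP[aS a0].
  by rewrite card_vsd_sub -?memvE // dyS2 dim_line // expn1.
apply/subsetP => -[w1 w2]; rewrite !inE /= ?in_vsd !memv_cap memv0.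
case/andP => /andP[/andP[w1y w1S] w10] /andP[/andP[w2y w2S] w2l].
apply/andP; split; first by repeat (apply/andP; split) => //.
apply/eqP/dimS_eq.
  by rewrite /f /= !subv_add -!memvE w1y w2y qy.
rewrite dy /f /= addline ?addline ?dim_line //.
apply: contra qS => h; apply: memv_sub h _.
by rewrite !subv_add -!memvE w1S w2S.
Qed.

Lemma q_gt1 : 1 < q.
Proof. exact: card_finNzRing_gt1. Qed.

Lemma case1b (S : {vspace V}) (q0 : V) (Y : seq {vspace V}) :
  \dim S = 4 -> q0 \notin S -> uniq Y ->
  (forall y, y \in Y -> [/\ \dim y = 3, q0 \in y & \dim (y :&: S) = 1]) ->
  size Y * ((q-1)*(q^3-q^2)) <= (q^4-1)*(q^7-q^5).
Proof.
move=> dS qS uY HY.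
have d5 : \dim (S + <[q0]>) = 5 by rewrite addline ?dS.
pose f := fun p : V * V => (<[p.1]> + <[q0]> + <[p.2]>)%VS.
apply: (leq_trans (@fiber_bound _ _ f _ _ (setX (vsd S 0%VS) (vsd fullv (S + <[q0]>))) uY _)) => [y yY|]; last first.
  by rewrite cardsX card_vsd0 card_compl dS d5.
case: (HY y yY) => dy qy dyS.
have d2 : \dim (y :&: (S + <[q0]>)) <= 2.
  rewrite leqNgt; apply/negP => h3.
  have e : (y :&: (S + <[q0]>))%VS = y by apply: dimS_eq; [exact: capvSl | rewrite dy].
  have ys : (y <= S + <[q0]>)%VS by rewrite -e capvSr.
  have h := dim_cap_ge y S; rewrite dy dS dyS in h.
  have h2 : (y + S <= S + <[q0]>)%VS by rewrite subv_add ys addvSl.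
  have := dimvS h2; rewrite d5. move: h. cbv [reverse_coercion]. lia.
apply: leq_trans (subset_leq_card (_ : setX (vsd (y:&:S) 0%VS) (vsd y (S + <[q0]>)) \subset _)).
  rewrite cardsX card_vsd0 card_vsd dyS dy expn1 leq_mul2l; apply/orP; right.
  by apply: leq_sub2l; rewrite leq_exp2l // q_gt1.
apply/subsetP => -[w u]; rewrite !inE /= ?in_vsd !memv_cap memv0 memvf.
case/andP => /andP[/andP[wy wS] w0] /andP[uy uS].
apply/andP; split; first by repeat (apply/andP; split) => //.
apply/eqP/dimS_eq.
  by rewrite /f /= !subv_add -!memvE wy uy qy.
have qw : q0 \notin <[w]>%VS.
  by apply: contra qS => h; apply: memv_sub h _; rewrite -memvE.
rewrite dy /f /= addline ?addline ?dim_line //.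
apply: contra uS => h; apply: memv_sub h _.
by rewrite !subv_add -!memvE; apply/andP; split; solve_mem.
Qed.

Lemma case2a (P : {vspace V}) (q0 : V) (Y : seq {vspace V}) :
  \dim P = 1 -> q0 \notin P -> uniq Y ->
  (forall y, y \in Y -> [/\ \dim y = 4, (P <= y)%VS & q0 \in y]) ->
  size Y * ((q^4-q^2)*(q^4-q^3)) <= (q^7-q^2)*(q^7-q^3).
Proof.
move=> dP qP uY HY.
pose L := (P + <[q0]>)%VS.
have dL : \dim L = 2 by rewrite /L addline ?dP.
pose f := fun p : V * V => (L + <[p.1]> + <[p.2]>)%VS.
apply: (leq_trans (@fiber_bound _ _ f _ _ [set p : V * V | (p.1 \in vsd fullv L) && (p.2 \in vsd fullv (L + <[p.1]>))] uY _)) => [y yY|]; last first.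
  have := @card_dep_le _ _ (vsd fullv L) (fun a => vsd fullv (L + <[a]>)) (q^7 - q^3).
  rewrite card_compl dL; apply => a; rewrite in_vsd memvf /= => aL.
  by rewrite card_compl addline // dL.
case: (HY y yY) => dy Py qy.
have Ly : (L <= y)%VS by rewrite /L subv_add Py -memvE.
apply: leq_trans (subset_leq_card (_ : [set p : V*V | (p.1 \in vsd y L) && (p.2 \in vsd y (L + <[p.1]>))] \subset _)).
  have := @card_dep_ge _ _ (vsd y L) (fun a => vsd y (L + <[a]>)) (q^4 - q^3).
  rewrite (card_vsd_sub Ly) dy dL; apply => a; rewrite in_vsd => /andP[ay aL].
  have Lay : (L + <[a]> <= y)%VS by rewrite subv_add Ly -memvE.
  by rewrite (card_vsd_sub Lay) dy addline // dL.
apply/subsetP => -[u v]; rewrite !inE /= ?in_vsd !memvf.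
case/andP => /andP[uy uL] /andP[vy vL].
apply/andP; split; first by repeat (apply/andP; split) => //.
apply/eqP/dimS_eq.
  by rewrite /f /= !subv_add -!memvE; repeat (apply/andP; split) => //.
change (\dim y <= \dim (L + <[u]> + <[v]>)).
by rewrite dy (addline vL) (addline uL) dL.
Qed.

Lemma notinP (P y : {vspace V}) (x : V) :
  \dim P = 1 -> ~~ (P <= y)%VS -> x \in y -> x != 0%R -> x \notin P.
Proof.
move=> dP Py xy x0; apply: contra Py => xP.
have e : <[x]>%VS = P by apply: dimS_eq; rewrite -?memvE // dP dim_line.
by rewrite -e -memvE.
Qed.

Lemma case2A (P E1 E2 E3 : {vspace V}) (q0 : V) (Y : seq {vspace V}) :
  \dim P = 1 -> \dim E1 = 3 -> \dim E2 = 3 -> \dim E3 = 3 ->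
  (P <= E1)%VS -> (P <= E2)%VS -> (P <= E3)%VS -> uniq Y ->
  (forall y, y \in Y -> [/\ \dim y = 4, ~~ (P <= y)%VS, q0 \in y &
     exists r1 r2 r3, [/\ [/\ r1 \in y, r1 \in E1 & r1 != 0%R],
                          [/\ r2 \in y, r2 \in E2 & r2 != 0%R],
                          [/\ r3 \in y, r3 \in E3 & r3 != 0%R] &
                          \dim (<[r1]> + <[r2]> + <[q0]> + <[r3]>) = 4]]) ->
  size Y * ((q-1)*(q-1)*(q-1)) <= (q^3-q)*(q^3-q)*(q^3-q).
Proof.
move=> dP d1 d2 d3 P1 P2 P3 uY HY.
pose f := fun p : V * V * V => (<[p.1.1]> + <[p.1.2]> + <[q0]> + <[p.2]>)%VS.
apply: (leq_trans (@fiber_bound _ _ f _ _ (setX (setX (vsd E1 P) (vsd E2 P)) (vsd E3 P)) uY _)) => [y yY|]; last first.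
  by rewrite !cardsX !card_vsd_sub // d1 d2 d3 dP expn1.
case: (HY y yY) => dy Py qy [r1 [r2 [r3 [[r1y r1E r10] [r2y r2E r20] [r3y r3E r30] dr]]]].
apply: leq_trans (subset_leq_card (_ : setX (setX (vsd <[r1]> 0%VS) (vsd <[r2]> 0%VS)) (vsd <[r3]> 0%VS) \subset _)).
  by rewrite !cardsX !card_vsd0 !dim_line // expn1.
apply/subsetP => -[[x1 x2] x3]; rewrite !inE /= ?in_vsd !memv0.
case/andP => /andP[/andP[x1r x10] /andP[x2r x20]] /andP[x3r x30].
have e1 := line_eq x1r x10; have e2 := line_eq x2r x20; have e3 := line_eq x3r x30.
have x1y : x1 \in y by apply: memv_sub x1r _; rewrite -memvE.
have x2y : x2 \in y by apply: memv_sub x2r _; rewrite -memvE.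
have x3y : x3 \in y by apply: memv_sub x3r _; rewrite -memvE.
have x1E : x1 \in E1 by apply: memv_sub x1r _; rewrite -memvE.
have x2E : x2 \in E2 by apply: memv_sub x2r _; rewrite -memvE.
have x3E : x3 \in E3 by apply: memv_sub x3r _; rewrite -memvE.
have := notinP dP Py x1y x10; have := notinP dP Py x2y x20; have := notinP dP Py x3y x30.
move=> n3 n2 n1.
apply/andP; split; first by repeat (apply/andP; split) => //.
apply/eqP/dimS_eq.
  by rewrite /f /= !subv_add -!memvE; repeat (apply/andP; split) => //.
change (\dim y <= \dim (<[x1]> + <[x2]> + <[q0]> + <[x3]>)).
by rewrite e1 e2 e3 dy dr.
Qed.

Lemma dim_addP (T P : {vspace V}) :
  \dim P = 1 -> ~~ (P <= T)%VS -> \dim (T + P) = (\dim T).+1.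
Proof.
move=> dP PT; have [eP p0] := dim1_line dP.
rewrite eP addline //; apply: contra PT => h; by rewrite eP -memvE.
Qed.

Lemma dimG (P Ei Ej : {vspace V}) (q0 a b : V) :
  (Ei :&: Ej)%VS = P -> q0 \notin (Ei + Ej)%VS ->
  a \in Ei -> a \notin P -> b \in Ej -> b \notin P ->
  \dim (<[a]> + <[b]> + <[q0]>) = 3.
Proof.
move=> eP qE aE aP bE bP.
have a0 : a != 0%R by apply: contraNneq aP => ->; rewrite mem0v.
have ba : b \notin <[a]>%VS.
  apply: contra bP => h; rewrite -eP memv_cap bE andbT.
  by apply: memv_sub h _; rewrite -memvE.
have qab : q0 \notin (<[a]> + <[b]>)%VS.
  apply: contra qE => h; apply: memv_sub h _.
  by apply: addvS; rewrite -memvE.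
by rewrite addline // addline // dim_line.
Qed.

Lemma case2B (P E1 E2 E3 : {vspace V}) (q0 : V) (Y : seq {vspace V}) :
  \dim P = 1 -> \dim E1 = 3 -> \dim E2 = 3 -> \dim E3 = 3 ->
  (P <= E1)%VS -> (P <= E2)%VS -> (P <= E3)%VS ->
  (E1 :&: E2)%VS = P -> (E1 :&: E3)%VS = P -> (E2 :&: E3)%VS = P ->
  q0 \notin (E1 + E2)%VS -> q0 \notin (E1 + E3)%VS -> q0 \notin (E2 + E3)%VS ->
  uniq Y ->
  (forall y, y \in Y -> [/\ \dim y = 4, ~~ (P <= y)%VS, q0 \in y &
     exists r1 r2 r3, [/\ [/\ r1 \in y, r1 \in E1 & r1 != 0%R],
                          [/\ r2 \in y, r2 \in E2 & r2 != 0%R],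
                          [/\ r3 \in y, r3 \in E3 & r3 != 0%R] &
                          r3 \in (<[r1]> + <[r2]> + <[q0]>)%VS]]) ->
  size Y * ((q-1)*(q-1)*(q^4-q^3)) <= (q^3-q)*(q^2-q)*(q^7-q^4).
Proof.
move=> dP d1 d2 d3 P1 P2 P3 e12 e13 e23 q12 q13 q23 uY HY.
pose T := fun p : V * V => (<[p.1]> + <[p.2]> + <[q0]>)%VS.
pose A := [set p : V * V | (p.1 \in vsd E1 P) && (p.2 \in vsd (E2 :&: (<[p.1]> + <[q0]> + E3)) P)].
pose B := fun p : V * V => [set v : V | (v \notin (T p + P)%VS) && ~~ (P <= T p)%VS].
pose f := fun p : V * V * V => (T p.1 + <[p.2]>)%VS.
apply: (leq_trans (@fiber_bound _ _ f _ _ [set p : V * V * V | (p.1 \in A) && (p.2 \in B p.1)] uY _)) => [y yY|]; last first.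
  apply: leq_trans (@card_dep_le _ _ A B (q^7 - q^4) _) _.
    move=> p; rewrite inE ?in_vsd => /andP[/andP[aE aP] /andP[]]; rewrite memv_cap => /andP[bE _] bP.
    have dT : \dim (T p) = 3 by apply: (dimG e12).
    case: (boolP (P <= T p)%VS) => PT.
      by apply: leq_trans (_ : #|(set0 : {set V})| <= _); [apply: subset_leq_card; apply/subsetP => v; rewrite !inE PT andbF | rewrite cards0].
    apply: leq_trans (subset_leq_card (_ : B p \subset vsd fullv (T p + P))) _.
      by apply/subsetP => v; rewrite !inE ?in_vsd memvf => /andP[].
    by rewrite card_compl dim_addP // dT.
  rewrite leq_mul2r; apply/orP; right.
  apply: leq_trans (@card_dep_le _ _ (vsd E1 P) (fun a => vsd (E2 :&: (<[a]> + <[q0]> + E3)) P) (q^2 - q) _) _.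
    move=> a; rewrite in_vsd => /andP[aE aP].
    pose M := (<[a]> + <[q0]> + E3)%VS.
    have PU : (P <= E2 :&: M)%VS.
      by rewrite subv_cap P2; apply: subv_trans P3 _; apply: addvSr.
    rewrite card_vsd_sub // dP expn1 leq_sub2r // leq_exp2l ?q_gt1 //.
    rewrite leqNgt; apply/negP => h3.
    have eU : (E2 :&: M)%VS = E2 by apply: dimS_eq; [exact: capvSl | rewrite d2].
    have E2M : (E2 <= M)%VS by rewrite -eU capvSr.
    have dM : \dim M <= 5.
      have l1 : forall x : V, \dim <[x]> <= 1 by move=> x; rewrite dim_vline leq_b1.
      have h2 : \dim (<[a]> + <[q0]>) <= 2 := leq_trans (dim_sum_le _ _) (leq_add (l1 a) (l1 q0)).
      apply: leq_trans (dim_sum_le _ _) _; rewrite d3.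
      by rewrite -[5]/(2+3) leq_add2r.
    have d23 : \dim (E2 + E3) = 5.
      by apply/eqP; rewrite -(eqn_add2r 1); have := dimv_sum_cap E2 E3; rewrite e23 dP d2 d3 => ->.
    have eM : (E2 + E3)%VS = M.
      apply: dimS_eq; first by rewrite subv_add E2M addvSr.
      by rewrite d23.
    by move: q23; rewrite eM; apply/negP/negPn; apply: memv_addl; apply: memv_addr; exact: memv_line.
  by rewrite card_vsd_sub // d1 dP expn1.
case: (HY y yY) => dy Py qy [r1 [r2 [r3 [[r1y r1E r10] [r2y r2E r20] [r3y r3E r30] r3T]]]].
have n1 := notinP dP Py r1y r10; have n2 := notinP dP Py r2y r20; have n3 := notinP dP Py r3y r30.
pose T0 := (<[r1]> + <[r2]> + <[q0]>)%VS.
have dT0 : \dim T0 = 3 by apply: (dimG e12).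
have T0y : (T0 <= y)%VS by rewrite /T0 !subv_add -!memvE; repeat (apply/andP; split) => //.
have eT' : (<[r1]> + <[r3]> + <[q0]>)%VS = T0.
  apply: dimS_eq; last by rewrite dT0 (dimG e13).
  rewrite !subv_add -!memvE; repeat (apply/andP; split) => //; rewrite /T0; solve_mem.
have PT0 : ~~ (P <= T0)%VS by apply: contra Py => h; apply: subv_trans h T0y.
have dTP : \dim (T0 + P) = 4 by rewrite dim_addP // dT0.
apply: leq_trans (subset_leq_card (_ : setX (setX (vsd <[r1]> 0%VS) (vsd <[r2]> 0%VS)) (vsd y T0) \subset _)).
  by rewrite !cardsX !card_vsd0 card_vsd_sub // !dim_line // expn1 dy dT0.
apply/subsetP => -[[x1 x2] v]; rewrite !inE /= ?in_vsd !memv0.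
case/andP => /andP[/andP[x1r x10] /andP[x2r x20]] /andP[vy vT].
have e1 := line_eq x1r x10; have e2 := line_eq x2r x20.
have x1y : x1 \in y by apply: memv_sub x1r _; rewrite -memvE.
have x2y : x2 \in y by apply: memv_sub x2r _; rewrite -memvE.
have x1E : x1 \in E1 by apply: memv_sub x1r _; rewrite -memvE.
have x2E : x2 \in E2 by apply: memv_sub x2r _; rewrite -memvE.
have m1 := notinP dP Py x1y x10; have m2 := notinP dP Py x2y x20.
have eT : T (x1, x2) = T0 by rewrite /T /= e1 e2.
have x2M : x2 \in (<[x1]> + <[q0]> + E3)%VS.
  rewrite e1; apply: memv_sub x2r _; apply: subv_trans (_ : T0 <= _)%VS.
    by rewrite /T0 -memvE; solve_mem.
  rewrite -eT' !subv_add -!memvE; repeat (apply/andP; split); solve_mem.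
have vTP : v \notin (T0 + P)%VS.
  apply/negP => h.
  have dTv : \dim (T0 + <[v]>) = 4 by rewrite addline // dT0.
  have eyT : (T0 + <[v]>)%VS = y.
    by apply: dimS_eq; [rewrite subv_add T0y -memvE | rewrite dy dTv].
  have eTP : (T0 + <[v]>)%VS = (T0 + P)%VS.
    by apply: dimS_eq; [rewrite subv_add addvSl -memvE | rewrite dTP dTv].
  by move: Py; rewrite -eyT eTP addvSr.
apply/andP; split.
  apply/andP; split.
    by rewrite memv_cap; repeat (apply/andP; split) => //.
  by rewrite ?inE eT; apply/andP; split.
apply/eqP; rewrite /f /= eT; apply: dimS_eq.
  by rewrite subv_add T0y -memvE.
by rewrite dy addline // dT0.
Qed.

End Cases.

Lemma div_bound a m X W : 0 < m -> W = X * m -> a * m <= W -> a <= X.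
Proof. by move=> m0 ->; rewrite leq_pmul2r. Qed.

Lemma subE x y z : x = z + y -> x - y = z.
Proof. by move=> ->; rewrite addnK. Qed.

Lemma arith (p a0 b0 a1 b1 a2 b2 c d e : nat) : 0 < p ->
  let q := p.+1 in
  a0 * ((q^2-1)*(q^2-q)) <= (q^4-1)*(q^4-q) ->
  a1 * ((q^2-1)*(q^2-q)) <= (q^4-1)*(q^4-q) ->
  a2 * ((q^2-1)*(q^2-q)) <= (q^4-1)*(q^4-q) ->
  b0 * ((q-1)*(q^3-q^2)) <= (q^4-1)*(q^7-q^5) ->
  b1 * ((q-1)*(q^3-q^2)) <= (q^4-1)*(q^7-q^5) ->
  b2 * ((q-1)*(q^3-q^2)) <= (q^4-1)*(q^7-q^5) ->
  c * ((q^4-q^2)*(q^4-q^3)) <= (q^7-q^2)*(q^7-q^3) ->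
  d * ((q-1)*(q-1)*(q-1)) <= (q^3-q)*(q^3-q)*(q^3-q) ->
  e * ((q-1)*(q-1)*(q^4-q^3)) <= (q^3-q)*(q^2-q)*(q^7-q^4) ->
  q.+1 * a0 + q.+1 * b0 + q.+1 * a1 + q.+1 * b1 + q.+1 * a2 + q.+1 * b2
    + q.+1 * c + q.+1 * d + q.+1 * e <=
  3 * q ^ 8 + 12 * q ^ 7 + 21 * q ^ 6 + 28 * q ^ 5
                      + 26 * q ^ 4 + 18 * q ^ 3 + 12 * q ^ 2 + 8 * q + 4.
Proof.
move=> p0 q.
have e1 : q - 1 = p by rewrite /q subn1.
have e2 : q^2 - 1 = p*(q+1) by apply: subE; rewrite /q; ring.
have e3 : q^2 - q = q* p by apply: subE; rewrite /q; ring.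
have e4 : q^3 - q^2 = q^2* p by apply: subE; rewrite /q; ring.
have e5 : q^3 - q = q* p*(q+1) by apply: subE; rewrite /q; ring.
have e6 : q^4 - 1 = p*(q+1)*(q^2+1) by apply: subE; rewrite /q; ring.
have e7 : q^4 - q = q* p*(q^2+q+1) by apply: subE; rewrite /q; ring.
have e8 : q^4 - q^2 = q^2* p*(q+1) by apply: subE; rewrite /q; ring.
have e9 : q^4 - q^3 = q^3* p by apply: subE; rewrite /q; ring.
have e10 : q^7 - q^5 = q^5* p*(q+1) by apply: subE; rewrite /q; ring.
have e11 : q^7 - q^2 = q^2* p*(q^4+q^3+q^2+q+1) by apply: subE; rewrite /q; ring.
have e12 : q^7 - q^3 = q^3* p*(q+1)*(q^2+1) by apply: subE; rewrite /q; ring.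
have e13 : q^7 - q^4 = q^4* p*(q^2+q+1) by apply: subE; rewrite /q; ring.
rewrite e1 e2 e3 e4 e5 e6 e7 e8 e9 e10 e11 e12 e13.
have qp : 0 < q by [].
move=> /div_bound H0 /div_bound H1 /div_bound H2 /div_bound H3 /div_bound H4 /div_bound H5
        /div_bound H6 /div_bound H7 /div_bound H8.
have m1 : 0 < p * (q + 1) * (q * p) by rewrite !muln_gt0 ?expn_gt0 ?p0 ?addn1.
have m2 : 0 < p * (q ^ 2 * p) by rewrite !muln_gt0 ?expn_gt0 ?p0 ?addn1.
have m3 : 0 < q ^ 2 * p * (q + 1) * (q ^ 3 * p) by rewrite !muln_gt0 ?expn_gt0 ?p0 ?addn1.
have m4 : 0 < p * p * p by rewrite !muln_gt0 ?expn_gt0 ?p0 ?addn1.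
have m5 : 0 < p * p * (q ^ 3 * p) by rewrite !muln_gt0 ?expn_gt0 ?p0 ?addn1.
have X1 : p * (q + 1) * (q ^ 2 + 1) * (q * p * (q ^ 2 + q + 1)) = ((q^2+1)*(q^2+q+1)) * (p * (q + 1) * (q * p)) by ring.
have X2 : p * (q + 1) * (q ^ 2 + 1) * (q ^ 5 * p * (q + 1)) = ((q^3+q^2+q+1)*(q^4+q^3)) * (p * (q ^ 2 * p)) by ring.
have X3 : q ^ 2 * p * (q ^ 4 + q ^ 3 + q ^ 2 + q + 1) * (q ^ 3 * p * (q + 1) * (q ^ 2 + 1)) = ((q^4+q^3+q^2+q+1)*(q^2+1)) * (q ^ 2 * p * (q + 1) * (q ^ 3 * p)) by rewrite /q; ring.
have X4 : q * p * (q + 1) * (q * p * (q + 1)) * (q * p * (q + 1)) = ((q^2+q)*(q^2+q)*(q^2+q)) * (p * p * p) by ring.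
have X5 : q * p * (q + 1) * (q * p) * (q ^ 4 * p * (q ^ 2 + q + 1)) = (q^3*(q+1)*(q^2+q+1)) * (p * p * (q ^ 3 * p)) by ring.
have := H0 _ m1 X1; have := H1 _ m1 X1; have := H2 _ m1 X1.
have := H3 _ m2 X2; have := H4 _ m2 X2; have := H5 _ m2 X2.
have := H6 _ m3 X3; have := H7 _ m4 X4; have := H8 _ m5 X5.
move=> Le Ld Lc Lb2 Lb1 Lb0 La2 La1 La0.
apply: (@leq_trans (q.+1 * ((q^2+1)*(q^2+q+1)) + q.+1 * ((q^3+q^2+q+1)*(q^4+q^3))
   + q.+1 * ((q^2+1)*(q^2+q+1)) + q.+1 * ((q^3+q^2+q+1)*(q^4+q^3))
   + q.+1 * ((q^2+1)*(q^2+q+1)) + q.+1 * ((q^3+q^2+q+1)*(q^4+q^3))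
   + q.+1 * ((q^4+q^3+q^2+q+1)*(q^2+1)) + q.+1 * ((q^2+q)*(q^2+q)*(q^2+q))
   + q.+1 * (q^3*(q+1)*(q^2+q+1)))).
  by repeat apply: leq_add; rewrite leq_mul2l ?(La0, La1, La2, Lb0, Lb1, Lb2, Lc, Ld, Le) ?orbT.
by rewrite leq_eqVlt; apply/orP; left; apply/eqP; ring.
Qed.

Lemma arith' (q a0 b0 a1 b1 a2 b2 c d e : nat) : 1 < q ->
  a0 * ((q^2-1)*(q^2-q)) <= (q^4-1)*(q^4-q) ->
  a1 * ((q^2-1)*(q^2-q)) <= (q^4-1)*(q^4-q) ->
  a2 * ((q^2-1)*(q^2-q)) <= (q^4-1)*(q^4-q) ->
  b0 * ((q-1)*(q^3-q^2)) <= (q^4-1)*(q^7-q^5) ->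
  b1 * ((q-1)*(q^3-q^2)) <= (q^4-1)*(q^7-q^5) ->
  b2 * ((q-1)*(q^3-q^2)) <= (q^4-1)*(q^7-q^5) ->
  c * ((q^4-q^2)*(q^4-q^3)) <= (q^7-q^2)*(q^7-q^3) ->
  d * ((q-1)*(q-1)*(q-1)) <= (q^3-q)*(q^3-q)*(q^3-q) ->
  e * ((q-1)*(q-1)*(q^4-q^3)) <= (q^3-q)*(q^2-q)*(q^7-q^4) ->
  q.+1 * a0 + q.+1 * b0 + q.+1 * a1 + q.+1 * b1 + q.+1 * a2 + q.+1 * b2
    + q.+1 * c + q.+1 * d + q.+1 * e <=
  3 * q ^ 8 + 12 * q ^ 7 + 21 * q ^ 6 + 28 * q ^ 5
                      + 26 * q ^ 4 + 18 * q ^ 3 + 12 * q ^ 2 + 8 * q + 4.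
Proof. case: q => [//|p] q1; exact: (@arith p). Qed.

Lemma class_bound (T U : eqType) (s : seq T) (g : T -> U) (p : pred T) k :
  (forall u, count (fun x => g x == u) s <= k) ->
  count p s <= k * size (undup [seq g x | x <- s & p x]).
Proof.
move=> H; apply: (count_class H) => x xs px.
by rewrite mem_undup; apply: map_f; rewrite mem_filter px xs.
Qed.

Lemma class_mem (T U : eqType) (s : seq T) (g : T -> U) (p : pred T) y :
  y \in undup [seq g x | x <- s & p x] -> exists2 x, x \in s & p x && (y == g x).
Proof.
rewrite mem_undup => /mapP [x]; rewrite mem_filter => /andP[px xs] ->.
by exists x => //; rewrite px eqxx.
Qed.

Lemma count_or (T : eqType) (a b : pred T) s :
  count (fun x => a x || b x) s <= count a s + count b s.
Proof. rewrite -count_predUI; exact: leq_addr. Qed.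

Theorem lemma4p3 (F : finFieldType) (C : seq (flag F))
  (HC : independent_set C)
  (Hplanes : forall E : subsp F, count (fun f => f.1 == E) C <= #|F|.+1)
  (Hsolids : forall S : subsp F, count (fun f => f.2 == S) C <= #|F|.+1)
  (P : subsp F) (HP : is_point P)
  (E S : 'I_3 -> subsp F)
  (HES : forall i, (E i, S i) \in Delta P C)
  (Hmeet : forall i j, i != j -> (E i :&: E j)%VS = P)
  (Q : subsp F) (HQ : is_point Q)
  (HQE : forall i j, ~~ (Q <= E i + E j)%VS)
  (HQS : forall i, ~~ (Q <= S i)%VS) :
  let q := #|F| in
  size (Delta Q C) <= 3 * q ^ 8 + 12 * q ^ 7 + 21 * q ^ 6 + 28 * q ^ 5
                      + 26 * q ^ 4 + 18 * q ^ 3 + 12 * q ^ 2 + 8 * q + 4.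
Proof.
rewrite /=.
case: HC => uC allC nadj.
have q1 := q_gt1 F.
have dP : \dim P = 1 by apply/eqP.
have [eQ q00] := dim1_line (eqP HQ).
set q0 := vpick Q in eQ q00.
have inQ : forall X, (Q <= X)%VS = (q0 \in X) by move=> X; rewrite eQ -memvE.
have HESi : forall i, [/\ (P <= E i)%VS, \dim (E i) = 3, \dim (S i) = 4,
                         (E i <= S i)%VS & (E i, S i) \in C].
  move=> i; have := HES i; rewrite mem_filter /= => /andP[PE inC].
  have := allP allC _ inC; rewrite /is_flag23 /is_plane /is_solid /=.
  by case/and3P => /eqP d3 /eqP d4 ES.
have qE : forall i j, q0 \notin (E i + E j)%VS by move=> i j; rewrite -inQ HQE.
have qS : forall i, q0 \notin S i by move=> i; rewrite -inQ HQS.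
have qEi : forall i, q0 \notin E i by move=> i; have := qE i i; rewrite addvv.
pose i0 : 'I_3 := @Ordinal 3 0 isT.
pose i1 : 'I_3 := @Ordinal 3 1 isT.
pose i2 : 'I_3 := @Ordinal 3 2 isT.
have n01 : i0 != i1 by [].
have n02 : i0 != i2 by [].
have n12 : i1 != i2 by [].
set D := Delta Q C.
have inD : forall f, f \in D -> [/\ f \in C, q0 \in f.1, \dim f.1 = 3, \dim f.2 = 4 & (f.1 <= f.2)%VS].
  move=> f; rewrite mem_filter -inQ => /andP[Qf fC].
  have := allP allC _ fC; rewrite /is_flag23 /is_plane /is_solid.
  by case/and3P => /eqP d3 /eqP d4 ES.
have adjD : forall f i, f \in D -> (f.1 :&: S i != 0)%VS || (E i :&: f.2 != 0)%VS.
  move=> f i fD; case: (inD f fD) => fC qf _ _ _.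
  have ne : f != (E i, S i).
    by apply/eqP => e; move: (qEi i); rewrite -[E i]/((E i, S i).1) -e qf.
  move: (nadj f (E i, S i) fC (let: And5 _ _ _ _ h := HESi i in h)).
  by rewrite /kneser_adj ne /= negb_and.
pose pa := fun (i : 'I_3) (f : flag F) => 1 < \dim (f.1 :&: S i).
pose pb := fun (i : 'I_3) (f : flag F) => \dim (f.1 :&: S i) == 1.
pose base := fun f : flag F =>
  [&& (f.1 :&: S i0 == 0)%VS, (f.1 :&: S i1 == 0)%VS & (f.1 :&: S i2 == 0)%VS].
pose r := fun (y : subsp F) (i : 'I_3) => vpick (y :&: E i)%VS.
pose dd := fun y : subsp F =>
  \dim (<[r y i0]> + <[r y i1]> + <[q0]> + <[r y i2]>) == 4.
pose p2a := fun f : flag F => base f && (P <= f.2)%VS.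
pose p2A := fun f : flag F => [&& base f, ~~ (P <= f.2)%VS & dd f.2].
pose p2B := fun f : flag F => [&& base f, ~~ (P <= f.2)%VS & ~~ dd f.2].
have pab : forall f i, (f.1 :&: S i != 0)%VS -> pa i f || pb i f.
  by move=> f i; rewrite -dimv_eq0 /pa /pb; case: (\dim _) => [|[|n]].
have Hcover : size D = count (fun f => pa i0 f || (pb i0 f || (pa i1 f || (pb i1 f ||
     (pa i2 f || (pb i2 f || (p2a f || (p2A f || p2B f)))))))) D.
  rewrite -(count_predT D); apply: eq_in_count => f fD /=.
  case: (boolP (f.1 :&: S i0 == 0)%VS) => h0; last first.
    by case/orP: (pab f i0 h0) => ->; rewrite ?orbT.
  case: (boolP (f.1 :&: S i1 == 0)%VS) => h1; last first.
    by case/orP: (pab f i1 h1) => ->; rewrite ?orbT.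
  case: (boolP (f.1 :&: S i2 == 0)%VS) => h2; last first.
    by case/orP: (pab f i2 h2) => ->; rewrite ?orbT.
  have bf : base f by rewrite /base h0 h1 h2.
  rewrite /p2a /p2A /p2B bf /=.
  by case: (P <= f.2)%VS; case: (dd f.2); rewrite ?orbT.
have Hsz : size D <= count (pa i0) D + (count (pb i0) D + (count (pa i1) D +
    (count (pb i1) D + (count (pa i2) D + (count (pb i2) D + (count p2a D +
    (count p2A D + count p2B D))))))).
  rewrite Hcover.
  by repeat (apply: leq_trans (count_or _ _ _) _; rewrite leq_add2l).
have Hk1 : forall u, count (fun f : flag F => f.1 == u) D <= #|F|.+1.
  move=> u; apply: leq_trans (Hplanes u); rewrite /D /Delta count_filter.
  by apply: sub_count => x /andP[].
have Hk2 : forall u, count (fun f : flag F => f.2 == u) D <= #|F|.+1.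
  move=> u; apply: leq_trans (Hsolids u); rewrite /D /Delta count_filter.
  by apply: sub_count => x /andP[].
pose Ya := fun i => undup [seq f.1 | f <- D & pa i f].
pose Yb := fun i => undup [seq f.1 | f <- D & pb i f].
pose Y2a := undup [seq f.2 | f <- D & p2a f].
pose Y2A := undup [seq f.2 | f <- D & p2A f].
pose Y2B := undup [seq f.2 | f <- D & p2B f].
have Ka : forall i, count (pa i) D <= #|F|.+1 * size (Ya i).
  by move=> i; apply: (class_bound (g := fun f : flag F => f.1)).
have Kb : forall i, count (pb i) D <= #|F|.+1 * size (Yb i).
  by move=> i; apply: (class_bound (g := fun f : flag F => f.1)).
have K2a : count p2a D <= #|F|.+1 * size Y2a.
  by apply: (class_bound (g := fun f : flag F => f.2)).
have K2A : count p2A D <= #|F|.+1 * size Y2A.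
  by apply: (class_bound (g := fun f : flag F => f.2)).
have K2B : count p2B D <= #|F|.+1 * size Y2B.
  by apply: (class_bound (g := fun f : flag F => f.2)).
have Ca : forall i, size (Ya i) * ((#|F| ^ 2-1)*(#|F| ^ 2- #|F| )) <= (#|F| ^ 4-1)*(#|F| ^ 4- #|F| ).
  move=> i; case: (HESi i) => _ _ dS _ _.
  apply: (case1a dS (qS i) (undup_uniq _)).
  move=> y /class_mem [f fD /andP[pf /eqP ->]]; case: (inD f fD) => _ qf d3 _ _.
  by split.
have Cb : forall i, size (Yb i) * ((#|F| -1)*(#|F| ^ 3- #|F| ^ 2)) <= (#|F| ^ 4-1)*(#|F| ^ 7- #|F| ^ 5).
  move=> i; case: (HESi i) => _ _ dS _ _.
  apply: (case1b dS (qS i) (undup_uniq _)).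
  move=> y /class_mem [f fD /andP[pf /eqP ->]]; case: (inD f fD) => _ qf d3 _ _.
  by split => //; apply/eqP.
have PE : forall i, (P <= E i)%VS by move=> i; case: (HESi i).
have dE : forall i, \dim (E i) = 3 by move=> i; case: (HESi i).
have qP : q0 \notin P by apply: contra (qEi i0) => h; apply: memv_sub h (PE i0).
have C2a : size Y2a * ((#|F| ^ 4 - #|F| ^ 2)*(#|F| ^ 4 - #|F| ^ 3)) <= (#|F| ^ 7 - #|F| ^ 2)*(#|F| ^ 7 - #|F| ^ 3).
  apply: (case2a dP qP (undup_uniq _)).
  move=> y /class_mem [f fD /andP[/andP[_ pf] /eqP ->]]; case: (inD f fD) => _ qf _ d4 f12.
  by split => //; apply: memv_sub qf f12.
have rprop : forall f i, f \in D -> (f.1 :&: S i == 0)%VS ->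
    [/\ r f.2 i \in f.2, r f.2 i \in E i & r f.2 i != 0%R].
  move=> f i fD h0; have := adjD f i fD; rewrite h0 /= capvC => nz.
  have := memv_pick (f.2 :&: E i)%VS; rewrite memv_cap => /andP[a b].
  by split => //; rewrite /r vpick0.
have C2A : size Y2A * ((#|F| - 1)*(#|F| - 1)*(#|F| - 1)) <= (#|F| ^ 3 - #|F| )*(#|F| ^ 3 - #|F| )*(#|F| ^ 3 - #|F| ).
  apply: (case2A dP (dE i0) (dE i1) (dE i2) (PE i0) (PE i1) (PE i2) (undup_uniq _)).
  move=> y /class_mem [f fD /andP[/and3P[bf nP ddf] /eqP ->]]; case: (inD f fD) => _ qf _ d4 f12.
  case/and3P: bf => h0 h1 h2.
  split => //; first by apply: memv_sub qf f12.
  exists (r f.2 i0), (r f.2 i1), (r f.2 i2); split; try exact: rprop.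
  exact/eqP.
have C2B : size Y2B * ((#|F| - 1)*(#|F| - 1)*(#|F| ^ 4 - #|F| ^ 3)) <= (#|F| ^ 3 - #|F| )*(#|F| ^ 2 - #|F| )*(#|F| ^ 7 - #|F| ^ 4).
  apply: (case2B dP (dE i0) (dE i1) (dE i2) (PE i0) (PE i1) (PE i2)
            (Hmeet _ _ n01) (Hmeet _ _ n02) (Hmeet _ _ n12) (qE i0 i1) (qE i0 i2) (qE i1 i2) (undup_uniq _)).
  move=> y /class_mem [f fD /andP[/and3P[bf nP ddf] /eqP ->]]; case: (inD f fD) => _ qf _ d4 f12.
  case/and3P: bf => h0 h1 h2.
  split => //; first by apply: memv_sub qf f12.
  have [a0y a0E a00] := rprop f i0 fD h0.
  have [a1y a1E a10] := rprop f i1 fD h1.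
  have [a2y a2E a20] := rprop f i2 fD h2.
  exists (r f.2 i0), (r f.2 i1), (r f.2 i2); split => //.
  apply/negPn/negP => h; move: ddf; rewrite /dd addline // (dimG (Hmeet _ _ n01) (qE i0 i1)) //.
    exact: (notinP dP nP).
  exact: (notinP dP nP).
have := arith' q1 (Ca i0) (Ca i1) (Ca i2) (Cb i0) (Cb i1) (Cb i2) C2a C2A C2B.
move=> Hfin.
have Hmid : count (pa i0) D + (count (pb i0) D + (count (pa i1) D +
    (count (pb i1) D + (count (pa i2) D + (count (pb i2) D + (count p2a D +
    (count p2A D + count p2B D))))))) <=
    #|F|.+1 * size (Ya i0) + (#|F|.+1 * size (Yb i0) + (#|F|.+1 * size (Ya i1) +
    (#|F|.+1 * size (Yb i1) + (#|F|.+1 * size (Ya i2) + (#|F|.+1 * size (Yb i2) +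
    (#|F|.+1 * size Y2a + (#|F|.+1 * size Y2A + #|F|.+1 * size Y2B))))))).
  apply: leq_add (Ka i0) _; apply: leq_add (Kb i0) _; apply: leq_add (Ka i1) _.
  apply: leq_add (Kb i1) _; apply: leq_add (Ka i2) _; apply: leq_add (Kb i2) _.
  apply: leq_add K2a _; exact: leq_add K2A K2B.
apply: leq_trans (leq_trans Hsz Hmid) _.
move: Hfin; rewrite !addnA; exact.
Qed.
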